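(* Let $A$ be a finite totally ordered alphabet and let $u\in A^{+}$ be a primitive word. Then the semigroups $S_{u}$ and $S(u)$ (defined in the context) are isomorphic; indeed the map $[x]\mapsto x'$ $(x\in A^{+})$ is a well-defined isomorphism $S_{u}\to S(u)$.
   Context: A word is primitive if it is not a power $r^{t}$ ($t\ge 2$) of another word. Words $w=xy$ and $yx$ are conjugates; the necklace $n(u)$ of a primitive word $u$ is its set of conjugates. For each letter $a\in A$ let $a'$ be the partial one-to-one map on $n(u)$ whose domain is the set of words of $n(u)$ beginning with $a$, given by $ax\mapsto xa$ (so $a'$ is the empty map if $a$ does not occur in $u$). For $x=b_{1}\cdots b_{m}\in A^{+}$ put $x'=b_{1}'b_{2}'\cdots b_{m}'$ (composition of partial maps, from left to right). $S(u)$ is the semigroup of partial maps on $n(u)$ generated by $\{a' : a\in A\}$ under composition. Let $\langle u\rangle=\{u^{m}:m\ge 1\}$ and let $\rho_{u}$ be the syntactic congruence of $\langle u\rangle$ on $A^{+}$: for $x,y\in A^{+}$, $x\,\rho_{u}\,y$ iff for all $p,q\in A^{*}$, $pxq\in\langle u\rangle\Leftrightarrow pyq\in\langle u\rangle$. $S_{u}=A^{+}/\rho_{u}$, and $[x]$ denotes the $\rho_u$-class of $x$. *)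

(* Defs.v *)
From mathcomp Require Import all_boot all_order.
Set Implicit Arguments. Unset Strict Implicit. Unset Printing Implicit Defensive.

Section Words.
Variable A : eqType.

Definition wpow (r : seq A) (t : nat) : seq A := flatten (nseq t r).

Definition primitive (u : seq A) : Prop :=
  forall (r : seq A) (t : nat), 2 <= t -> u <> wpow r t.

Definition in_powers (u w : seq A) : Prop :=
  exists m, 1 <= m /\ w = wpow u m.

Definition rho (u x y : seq A) : Prop :=
  forall p q : seq A, in_powers u (p ++ x ++ q) <-> in_powers u (p ++ y ++ q).

(* necklace n(u): the conjugates y x of u = x y (i.e. the rotations of u) *)
Definition in_necklace (u w : seq A) : bool :=
  has (fun i => rot i u == w) (iota 0 (size u)).

(* partial maps on n(u), represented as functions seq A -> option (seq A)
   that return None outside their domain (in particular outside n(u)) *)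
Definition pmap_t := seq A -> option (seq A).

(* composition from left to right: first f, then g *)
Definition pmcomp (f g : pmap_t) : pmap_t := fun w => obind g (f w).

Definition letter_map (u : seq A) (a : A) : pmap_t :=
  fun w => match w with
           | b :: x => if (b == a) && in_necklace u w then Some (rcons x a) else None
           | [::] => None
           end.

Definition word_map (u : seq A) (x : seq A) : pmap_t :=
  foldl (fun f a => pmcomp f (letter_map u a)) (fun w => if in_necklace u w then Some w else None) x.

Inductive inS (u : seq A) : pmap_t -> Prop :=
| inS_gen (a : A) : inS u (letter_map u a)
| inS_comp (f g : pmap_t) : inS u f -> inS u g -> inS u (pmcomp f g).

End Words.

(* Main.v *)
Require Import Defs.
From mathcomp Require Import all_boot all_order.
From mathcomp Require Import zify.
From Stdlib Require Import FunctionalExtensionality.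

Section Aux.
Variables (A : eqType) (u : seq A) (x0 : A).
Hypothesis un0 : 0 < size u.

Definition U j := nth x0 u (j %% size u).

Lemma nth_rot m j : m <= size u -> j < size u -> nth x0 (rot m u) j = U (m + j).
Proof.
move=> hm hj; rewrite /rot /U nth_cat size_drop.
case: ltnP => h.
  by rewrite nth_drop modn_small //; lia.
rewrite nth_take; last by lia.
have -> : m + j = (j - (size u - m)) + size u by lia.
rewrite modnDr modn_small //; lia.
Qed.

Lemma R1 k : exists w', rot (k %% size u) u = U k :: w' /\
   rcons w' (U k) = rot (k.+1 %% size u) u.
Proof.
have hm : k %% size u < size u by rewrite ltn_pmod.
exists (drop (k %% size u).+1 u ++ take (k %% size u) u).
split; first by rewrite /rot (drop_nth x0 hm).
rewrite -cats1 -catA cats1 -take_nth //.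
have -> : drop (k %% size u).+1 u ++ take (k %% size u).+1 u = rot (k %% size u).+1 u by [].
clear hm.
have -> : k.+1 %% size u = (k %% size u).+1 %% size u.
  by rewrite -addn1 -modnDml addn1.
case: (ltnP (k %% size u).+1 (size u)) => h; first by rewrite (modn_small h).
have e : (k %% size u).+1 = size u by lia.
by rewrite e modnn rot_size rot0.
Qed.

Lemma necP w : in_necklace u w <-> exists i, w = rot (i %% size u) u.
Proof.
split.
  move/hasP=> [i]; rewrite mem_iota add0n => /andP[_ hi] /eqP <-.
  by exists i; rewrite modn_small.
case=> i ->; apply/hasP; exists (i %% size u) => //.
by rewrite mem_iota add0n ltn_pmod.
Qed.

Fixpoint Db (x : seq A) (i : nat) : bool :=
  match x with [::] => true | a :: x' => (a == U i) && Db x' i.+1 end.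

Lemma Db_rcons x a i : Db (rcons x a) i = Db x i && (a == U (i + size x)).
Proof.
elim: x i => [|b x IH] i /=; first by rewrite addn0 andbT.
by rewrite IH addSnnS andbA.
Qed.

Lemma DbP x i : Db x i <-> (forall j, j < size x -> nth x0 x j = U (i + j)).
Proof.
elim: x i => [|a x IH] i /=; first by split.
split.
  case/andP => /eqP ha /IH hx [|j] hj /=; first by rewrite addn0.
  by rewrite hx // addSnnS.
move=> h; apply/andP; split; first by apply/eqP; have := h 0 isT; rewrite addn0.
by apply/IH => j hj; rewrite addSnnS; apply: (h j.+1).
Qed.

Lemma wm_nil w : word_map u [::] w = if in_necklace u w then Some w else None.
Proof. by []. Qed.

Lemma wm_rcons x a w :
  word_map u (rcons x a) w = obind (letter_map u a) (word_map u x w).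
Proof. by rewrite /word_map foldl_rcons. Qed.

Lemma wm_out x w : ~~ in_necklace u w -> word_map u x w = None.
Proof.
move=> h; elim/last_ind: x => [|x a IH]; first by rewrite wm_nil (negbTE h).
by rewrite wm_rcons IH.
Qed.

Lemma wm_rot x i : word_map u x (rot (i %% size u) u) =
  if Db x i then Some (rot ((i + size x) %% size u) u) else None.
Proof.
elim/last_ind: x => [|x a IH].
  rewrite wm_nil /= addn0.
  have -> : in_necklace u (rot (i %% size u) u) by apply/necP; exists i.
  by [].
rewrite wm_rcons IH Db_rcons size_rcons; case: (Db x i) => //=.
have [w' [e1 e2]] := R1 (i + size x).
rewrite /letter_map e1.
have -> : in_necklace u (U (i + size x) :: w') by rewrite -e1; apply/necP; eexists.
rewrite andbT eq_sym; case: eqP => [ea|] //.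
by rewrite ea e2 addnS.
Qed.

Lemma wm_nec x w v : word_map u x w = Some v -> in_necklace u v.
Proof.
case: (boolP (in_necklace u w)) => [/necP [i ->]|h]; last by rewrite wm_out.
rewrite wm_rot; case: ifP => // _ [<-]; apply/necP; eexists; reflexivity.
Qed.

Lemma wm_cat x y w :
  word_map u (x ++ y) w = obind (word_map u y) (word_map u x w).
Proof.
elim/last_ind: y => [|y a IH].
  rewrite cats0; case E: (word_map u x w) => [v|] //=.
  by rewrite wm_nil (wm_nec _ _ _ E).
rewrite -rcons_cat !wm_rcons IH.
by case: (word_map u x w) => //= v; rewrite wm_rcons.
Qed.

Lemma wm_single a w : word_map u [:: a] w = letter_map u a w.
Proof.
rewrite -[[:: a]]/(rcons [::] a) wm_rcons wm_nil.
case: ifP => hn //=.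
by rewrite /letter_map; case: w hn => // b x ->; rewrite andbF.
Qed.

Lemma wpowS (r : seq A) t : wpow r t.+1 = r ++ wpow r t.
Proof. by []. Qed.

Lemma size_wpow (r : seq A) t : size (wpow r t) = t * size r.
Proof. by elim: t => //= t IH; rewrite wpowS size_cat IH mulSn. Qed.

Lemma nth_wpow (r : seq A) t j : j < t * size r ->
  nth x0 (wpow r t) j = nth x0 r (j %% size r).
Proof.
elim: t j => [|t IH] j; first by rewrite mul0n.
rewrite wpowS nth_cat mulSn => hj.
case: ltnP => h; first by rewrite (modn_small h).
rewrite IH; last by lia.
by rewrite -{2}(subnK h) modnDr.
Qed.

Lemma powP s : in_powers u s <->
  [/\ 0 < size s, size u %| size s & forall j, j < size s -> nth x0 s j = U j].
Proof.
split.
  case=> m [hm ->]; rewrite size_wpow; split.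
  - by rewrite muln_gt0 hm un0.
  - exact: dvdn_mull.
  - by move=> j hj; rewrite nth_wpow.
case=> h1 h2 h3; exists (size s %/ size u); split.
  by rewrite divn_gt0 // dvdn_leq.
apply: (@eq_from_nth _ x0); first by rewrite size_wpow divnK.
by move=> j hj; rewrite h3 // nth_wpow // divnK.
Qed.

Definition per p := forall j, U (j + p) = U j.

Lemma per_n : per (size u).
Proof. by move=> j; rewrite /U modnDr. Qed.

Lemma per_mul p m : per p -> per (m * p).
Proof.
move=> hp; elim: m => [|m IH] j; first by rewrite mul0n addn0.
by rewrite mulSn addnA IH hp.
Qed.

Lemma per_sub p q : per p -> per q -> p <= q -> per (q - p).
Proof. by move=> hp hq h j; rewrite -(hp (j + (q - p))) -addnA subnK // hq. Qed.

Lemma per_mod p q : per p -> per q -> per (q %% p).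
Proof.
move=> hp hq.
have -> : q %% p = q - q %/ p * p by rewrite {2}(divn_eq q p) addnC addnK.
apply: per_sub => //; [exact: per_mul | exact: leq_divM].
Qed.

Lemma per_gcd a b : per a -> per b -> per (gcdn a b).
Proof.
elim/ltn_ind: a b => a IH b ha hb.
case: (posnP a) => [->|apos]; first by rewrite gcd0n.
rewrite -gcdn_modr gcdnC; apply: IH => //; first by rewrite ltn_pmod.
exact: per_mod.
Qed.

Lemma rot_per k : k < size u -> rot k u = u -> per k.
Proof.
move=> hk e j.
have hj : j %% size u < size u by rewrite ltn_pmod.
have := @nth_rot k (j %% size u) (ltnW hk) hj; rewrite e /U => ->.
by rewrite modnDmr addnC.
Qed.

Lemma rot_uniq (prim : primitive u) a b : a < size u -> b < size u ->
  rot a u = rot b u -> a = b.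
Proof.
wlog: a b / a <= b.
  move=> H ha hb e; case: (leqP a b) => h; first exact: H.
  by symmetry; apply: H => //; exact: ltnW.
move=> hab ha hb e.
move: hab; rewrite leq_eqVlt => /orP [/eqP //| hlt]; exfalso.
have hb' : b = a + (b - a) by lia.
rewrite hb' rotD in e; last by lia.
have ek := rot_inj e.
have pk := @rot_per (b - a) ltac:(lia) (esym ek).
have pg := @per_gcd _ _ pk per_n.
have g0 : 0 < gcdn (b - a) (size u) by rewrite gcdn_gt0 un0 orbT.
have gn : gcdn (b - a) (size u) %| size u := dvdn_gcdr _ _.
have gk : gcdn (b - a) (size u) <= b - a.
  by apply: dvdn_leq; [lia | exact: dvdn_gcdl].
move: pg g0 gn gk; set g := gcdn _ _ => pg g0 gn gk.
have ht := divnK gn.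
move: ht; set t := size u %/ g => ht.
apply: (prim (take g u) t).
  nia.
have gu : g <= size u by lia.
apply: (@eq_from_nth _ x0); first by rewrite size_wpow size_takel.
move=> j hj.
rewrite nth_wpow; last by rewrite size_takel // ht.
rewrite size_takel // nth_take; last by rewrite ltn_pmod.
have := pg; rewrite /per => pg'.
have e1 : U j = U (j %% g).
  by rewrite {1}(divn_eq j g) addnC (@per_mul g (j %/ g) pg).
move: e1; rewrite /U (modn_small hj) (@modn_small (j %% g)) //.
by apply: (leq_trans _ gu); rewrite ltn_pmod.
Qed.

Lemma key x y i : rho u x y -> Db x i ->
  Db y i /\ (i + size x) %% size u = (i + size y) %% size u.
Proof.
move=> H /DbP hx.
have hr : (i + size x) %% size u < size u by rewrite ltn_pmod.
set r := (i + size x) %% size u in hr.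
set len := size u - r.
set p := mkseq U i.
set q := mkseq (fun j => U (i + size x + j)) len.
have P1 : in_powers u (p ++ x ++ q).
  apply/powP; rewrite !size_cat !size_mkseq; split.
  - lia.
  - apply/dvdnP; exists ((i + size x) %/ size u).+1.
    have := divn_eq (i + size x) (size u).
    rewrite -/r mulSn; lia.
  - move=> j hj; rewrite nth_cat size_mkseq; case: ltnP => h1.
      by rewrite nth_mkseq.
    rewrite nth_cat; case: ltnP => h2.
      by rewrite hx; [congr U; lia | lia].
    by rewrite nth_mkseq; [congr U; lia | lia].
have [_ hdx _] := (powP _).1 P1.
have [_ hd hn] := (powP _).1 ((H p q).1 P1).
split.
  apply/DbP => j hj.
  rewrite -(hn (i + j)); last by rewrite !size_cat size_mkseq; lia.
  by rewrite nth_cat size_mkseq ltnNge leq_addr /= addKn nth_cat hj.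
apply/eqP; rewrite -(eqn_modDr len).
move: hdx hd; rewrite /q !size_cat !size_mkseq /dvdn !addnA => /eqP -> /eqP ->.
by [].
Qed.

Lemma conv x y (prim : primitive u) : y != [::] ->
  (forall w, word_map u x w = word_map u y w) ->
  forall p q, in_powers u (p ++ x ++ q) -> in_powers u (p ++ y ++ q).
Proof.
move=> hy E p q /powP [h0 hd hn].
set i := size p.
have hx : Db x i.
  apply/DbP => j hj.
  rewrite -(hn (i + j)); last by rewrite !size_cat; lia.
  by rewrite nth_cat ltnNge leq_addr /= addKn nth_cat hj.
have := E (rot (i %% size u) u); rewrite !wm_rot hx.
case: ifP => // hy' [] /rot_uniq e.
have {}e := e prim (ltn_pmod _ un0) (ltn_pmod _ un0).
move/DbP: hy' => hy'.
have ys : 0 < size y by rewrite lt0n size_eq0.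
apply/powP; split.
- rewrite !size_cat; lia.
- move: hd; rewrite !size_cat /dvdn !addnA.
  by rewrite -(modnDml (i + size x)) -(modnDml (i + size y)) e.
- move=> j hj; rewrite nth_cat; case: ltnP => h1.
    rewrite -(hn j); last by rewrite !size_cat; lia.
    by rewrite nth_cat h1.
  rewrite nth_cat; case: ltnP => h2.
    by rewrite hy'; [congr U; lia | lia].
  set k := j - i - size y.
  rewrite size_cat in hj.
  have hk := hn (i + size x + k).
  rewrite nth_cat ifF in hk; last by apply/negbTE; rewrite -leqNgt; lia.
  rewrite nth_cat ifF in hk; last by apply/negbTE; rewrite -leqNgt; lia.
  have ek : i + size x + k - i - size x = k by lia.
  rewrite ek in hk; rewrite hk; last by move: hj; rewrite !size_cat; lia.
  rewrite /U -modnDml e modnDml; congr nth; congr modn; lia.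
Qed.

End Aux.

Theorem theorem2p5 (d : Order.disp_t) (A : finOrderType d) (u : seq A) :
  u != [::] -> primitive u ->
  [/\ (forall x : seq A, x != [::] -> inS u (word_map u x)),
      (forall x y : seq A, x != [::] -> y != [::] ->
         (rho u x y <-> forall w, word_map u x w = word_map u y w)),
      (forall x y : seq A, x != [::] -> y != [::] ->
         forall w, word_map u (x ++ y) w = pmcomp (word_map u x) (word_map u y) w)
    & (forall f, inS u f -> exists2 x : seq A, x != [::] &
         forall w, f w = word_map u x w)].
Proof.
move=> hu prim.
have x0 : A by case: u hu prim => // c _ _ _; exact c.
have un0 : 0 < size u by rewrite lt0n size_eq0.
split.
- move=> x hx; elim/last_ind: x hx => [//|x a IH] _.
  case: (eqVneq x [::]) => [->|hx].
    have -> : word_map u (rcons [::] a) = letter_map u a.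
      by apply: functional_extensionality => w; exact: wm_single.
    by constructor.
  have -> : word_map u (rcons x a) = pmcomp (word_map u x) (letter_map u a).
    by rewrite /word_map foldl_rcons.
  by constructor; [exact: IH | constructor].
- move=> x y hx hy; split.
    move=> H w.
    case: (boolP (in_necklace u w)) => [/(@necP _ u un0 w) [i ->]|h];
      last by rewrite !wm_out.
    rewrite !(@wm_rot _ u x0 un0).
    case: (boolP (@Db _ u x0 x i)) => hxi.
      by have [-> ->] := @key _ u x0 un0 _ _ _ H hxi.
    case: (boolP (@Db _ u x0 y i)) => hyi //.
    have Hs : rho u y x by move=> p q; symmetry; apply: H.
    by have [] := @key _ u x0 un0 _ _ _ Hs hyi; rewrite (negbTE hxi).
  move=> E p q; split; apply: (@conv _ u x0 un0) => // w; by rewrite E.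
- by move=> x y _ _ w; exact: (@wm_cat _ u x0 un0).
- move=> f; elim => [a | f1 g _ [xf hxf Ef] _ [xg hxg Eg]].
    by exists [:: a] => // w; rewrite wm_single.
  exists (xf ++ xg); first by case: xf hxf {Ef}.
  move=> w; rewrite (@wm_cat _ u x0 un0) /pmcomp Ef.
  by case: (word_map u xf w) => //= v; exact: Eg.
Qed.
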